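(* Let $p \equiv 1 \pmod 4$ be a prime, let $\ell \neq p$ be a prime, and let $\alpha, \beta \colon \mathbf{F}_p^{\boxtimes} \to \mathbf{Z}/\ell$ be voltage assignments. Suppose the adjacency spectra of the covers $X^\alpha$ and $X^\beta$ coincide, i.e. $\{\theta^\alpha_{a,k}\}_{a \in \mathbf{F}_p,\, k \in \mathbf{Z}/\ell} = \{\theta^\beta_{a,k}\}_{a \in \mathbf{F}_p,\, k \in \mathbf{Z}/\ell}$ as multisets. Then there exists $n \in (\mathbf{Z}/\ell)^\times$ such that $X^\alpha$ and $X^{n\beta}$ are isomorphic as $\mathbf{Z}/\ell$-covering graphs. In particular, $X^\alpha$ and $X^\beta$ are isomorphic as graphs.
   Context: For a finite field $\mathbf{F}_q$ of characteristic $p$ with $q = p^r \equiv 1 \pmod 4$, let $\mathbf{F}_q^{\boxtimes} = \{x^2 : x \in \mathbf{F}_q^\times\}$ be the set of nonzero squares (it contains $-1$). The Paley graph $X(\mathbf{F}_q)$ has vertex set $\mathbf{F}_q$ with $x$ adjacent to $y$ iff $y - x \in \mathbf{F}_q^{\boxtimes}$. Fix a prime $\ell \neq p$. A voltage assignment is a function $\alpha \colon \mathbf{F}_q^{\boxtimes} \to \mathbf{Z}/\ell$ that is not identically zero and satisfies $\alpha(-s) = -\alpha(s)$ for all $s \in \mathbf{F}_q^{\boxtimes}$. The translation invariant $\mathbf{Z}/\ell$-cover $X^\alpha$ is the graph with vertex set $\mathbf{F}_q \times \mathbf{Z}/\ell$ and an edge between $(x,i)$ and $(y,j)$ iff $y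 - x \in \mathbf{F}_q^{\boxtimes}$ and $j - i = \alpha(y-x)$; equivalently it is the Cayley graph of $\mathbf{F}_q^+ \times \mathbf{Z}/\ell$ with respect to $S^\alpha = \{(s, \alpha(s)) : s \in \mathbf{F}_q^{\boxtimes}\}$. It comes with the projection $(x,i) \mapsto x$ to $X(\mathbf{F}_q)$ and the action of $\mathbf{Z}/\ell$ by $j \cdot (x,i) = (x, i+j)$. For $n \in (\mathbf{Z}/\ell)^\times$, $n\alpha$ denotes the voltage assignment $s \mapsto n\alpha(s)$. An isomorphism of $\mathbf{Z}/\ell$-covering graphs $X^\alpha \to X^\beta$ is a graph isomorphism $f$ with $f(x, i+j) = f(x,i) + (0,j)$ for all $x, i, j$ (so it induces a map on the base $X(\mathbf{F}_q)$ compatible with the projections). Let $\zeta_p = e^{2\pi i/p}$, $\zeta_\ell = e^{2\pi i/\ell}$, and $\mathrm{tr} \colon \mathbf{F}_q \to \mathbf{F}_p$, $\mathrm{tr}(x) = x + x^p + \dots + x^{p^{r-1}}$. For $a \in \mathbf{F}_q$ and $k \in \mathbf{Z}/\ell$ set $\theta^\alpha_{a,k} = \sum_{s \in \mathbf{F}_q^{\boxtimes}} \zeta_p^{\mathrm{tr}(as)} \zeta_\ell^{k\alpha(s)}$; the multiset $\{\theta^\alpha_{a,k}\}_{a \in \mathbf{F}_q, k \in \mathbf{Z}/\ell}$ is the multiset of eigenvalues of the adjacency matrix of $X^\alpha$. *)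

(* Defs.v *)
From HB Require Import structures.
From mathcomp Require Import all_boot all_order all_algebra all_field.
Set Implicit Arguments. Unset Strict Implicit. Unset Printing Implicit Defensive.
Import Order.TTheory GRing.Theory Num.Theory.
Local Open Scope ring_scope.

(* zeta n = e^{2 pi i / n} in algC : n.-root (-1) is the n-th root of -1 with
   maximal real part and nonnegative imaginary part, i.e. e^{i pi / n}. *)
Definition zeta (n : nat) : algC := (n.-root (-1)) ^+ 2.

Definition is_sq (p : nat) (x : 'F_p) : bool :=
  (x != 0) && [exists y : 'F_p, y ^+ 2 == x].

(* voltage assignment F_p^squares -> Z/l, encoded as a function on F_p whose
   values outside the squares are irrelevant *)
Definition voltage (p l : nat) (alpha : 'F_p -> 'Z_l) : Prop :=
  (exists s : 'F_p, is_sq s /\ alpha s != 0) /\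
  (forall s : 'F_p, is_sq s -> alpha (- s) = - alpha s).

Definition cover_adj (p l : nat) (alpha : 'F_p -> 'Z_l)
  (u v : 'F_p * 'Z_l) : bool :=
  is_sq (v.1 - u.1) && (v.2 - u.2 == alpha (v.1 - u.1)).

(* theta^alpha_{a,k} = sum_{s square} zeta_p^{a s} zeta_l^{k alpha(s)}  (r = 1, tr = id) *)
Definition theta (p l : nat) (alpha : 'F_p -> 'Z_l) (a : 'F_p) (k : 'Z_l) : algC :=
  \sum_(s : 'F_p | is_sq s)
     zeta p ^+ (nat_of_ord (a * s)) * zeta l ^+ (nat_of_ord (k * alpha s)).

Definition spectrum (p l : nat) (alpha : 'F_p -> 'Z_l) : seq algC :=
  [seq theta alpha x.1 x.2 | x : 'F_p * 'Z_l].

Definition graph_iso (V : finType) (e1 e2 : rel V) (f : V -> V) : Prop :=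
  bijective f /\ forall u v, e1 u v = e2 (f u) (f v).

Definition cover_iso (p l : nat) (alpha beta : 'F_p -> 'Z_l)
  (f : 'F_p * 'Z_l -> 'F_p * 'Z_l) : Prop :=
  graph_iso (cover_adj alpha) (cover_adj beta) f /\
  forall (x : 'F_p) (i j : 'Z_l), f (x, i + j) = ((f (x, i)).1, (f (x, i)).2 + j).

Definition scale_voltage (p l : nat) (n : 'Z_l) (beta : 'F_p -> 'Z_l) : 'F_p -> 'Z_l :=
  fun s => n * beta s.

(* Main.v *)
From HB Require Import structures.
From mathcomp Require Import all_boot all_order all_algebra all_field.
From mathcomp Require Import ring.
Require Import Defs.
Import Order.TTheory GRing.Theory Num.Theory.
Local Open Scope ring_scope.
Lemma valFpM p (pr : prime p) (x y : 'F_p) : val (x * y) = ((val x * val y) %% p)%N.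
Proof. by rewrite /=; congr modn; exact: Fp_cast. Qed.
Lemma valFpD p (pr : prime p) (x y : 'F_p) : val (x + y) = ((val x + val y) %% p)%N.
Proof. by rewrite /=; congr modn; exact: Fp_cast. Qed.
Lemma valFp1 p (pr : prime p) : val (1 : 'F_p) = 1%N.
Proof. by rewrite /= Fp_cast // modn_small // prime_gt1. Qed.
Lemma valZpM l (pr : prime l) (x y : 'Z_l) : val (x * y) = ((val x * val y) %% l)%N.
Proof. by rewrite /=; congr modn; apply: Zp_cast; exact: prime_gt1. Qed.

Lemma zetaXn {n} : (0 < n)%N -> zeta n ^+ n = 1.
Proof.
move=> n0; rewrite /zeta exprAC rootCK //; by rewrite sqrrN expr1n.
Qed.

Lemma zeta_neq1 {n} : (1 < n)%N -> zeta n != 1.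
Proof.
move=> n1; have n0 : (0 < n)%N by exact: ltnW.
apply/eqP => /eqP; rewrite /zeta -subr_eq0 subr_sqr_1 mulf_eq0 !subr_eq0 => /orP[] /eqP e.
  have := @rootCK algC _ n0 (-1); rewrite e expr1n => /eqP; rewrite -addr_eq0 => /eqP h.
  by have := pnatr_eq0 algC 2; rewrite (natrD _ 1 1) h eqxx.
move/eqP: e; rewrite addr_eq0 => /eqP e.
have := @rootC_lt0 algC _ (-1) n1; by rewrite e ltrN10.
Qed.

Lemma zeta_prim n : prime n -> n.-primitive_root (zeta n).
Proof.
move=> pn; have n0 := prime_gt0 pn.
have [m pm mn] := @prim_order_exists _ n (zeta n) n0 (zetaXn n0).
have := pn; case/primeP=> n1 /(_ m mn) /orP[] /eqP me; last by move: pm; rewrite me.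
have := prim_expr_order pm; rewrite me expr1 => e.
by move: (zeta_neq1 n1); rewrite e eqxx.
Qed.

Lemma valFp_lt p (pr : prime p) (x : 'F_p) : (val x < p)%N.
Proof. case: x => /= x; by rewrite (Fp_cast pr). Qed.

Section Char.
Variable p : nat.
Hypothesis pr : prime p.

Definition E (t : 'F_p) : algC := zeta p ^+ val t.

Lemma wXp : zeta p ^+ p = 1.
Proof. exact: zetaXn (prime_gt0 pr). Qed.

Lemma ED s t : E (s + t) = E s * E t.
Proof. by rewrite /E valFpD // expr_mod ?wXp // exprD. Qed.

Lemma E0 : E 0 = 1.
Proof. by rewrite /E expr0. Qed.

Lemma EM s t : E (s * t) = zeta p ^+ (val s * val t).
Proof. by rewrite /E valFpM // expr_mod ?wXp. Qed.

Lemma E_sum0 : \sum_(m : 'F_p) E m = 0.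
Proof.
set S := \sum_(m : 'F_p) E m.
have h : E 1 * S = S.
  rewrite /S mulr_sumr [RHS](reindex_inj (addrI 1)) /=.
  by apply: eq_bigr => m _; rewrite ED.
have : (zeta p - 1) * S = 0 by rewrite mulrBl mul1r -[X in _ - X]h /E valFp1 // expr1 subrr.
move/eqP; rewrite mulf_eq0 => /orP[|/eqP //]; rewrite subr_eq0 => /eqP e.
by move: (zeta_neq1 (prime_gt1 pr)); rewrite e eqxx.
Qed.

Lemma E_sumM t : \sum_(m : 'F_p) E (m * t) = if t == 0 then p%:R else 0.
Proof.
case: eqP => [->|/eqP t0].
  under eq_bigr do rewrite mulr0 E0.
  by rewrite sumr_const card_Fp.
transitivity (\sum_(m : 'F_p) E m); last exact: E_sum0.
by rewrite [RHS](reindex_inj (mulIf t0)).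
Qed.

Variable l : nat.
Hypothesis prl : prime l.
Hypothesis lp : l != p.

Lemma aut_step (D : 'F_p -> algC) :
  (forall u : {rmorphism algC -> algC}, u (zeta l) = zeta l -> forall i, u (D i) = D i) ->
  \sum_i D i * E i = 0 -> forall m : 'F_p, m != 0 -> \sum_i D i * E (m * i) = 0.
Proof.
move=> Dfix Dsum m m0.
have cpl : coprime p l by rewrite prime_coprime // dvdn_prime2 // eq_sym.
set k := chinese p l (val m) 1.
have kp : (k %% p = val m)%N.
  by rewrite chinese_modl // modn_small // valFp_lt.
have kl : (k %% l = 1)%N by rewrite chinese_modr // modn_small // prime_gt1.
have ck : coprime k (p * l).
  rewrite coprimeMr; apply/andP; split.
    rewrite coprime_sym -coprime_modr kp prime_coprime //.
    apply/negP => /(dvdn_leq _); rewrite lt0n => /(_ m0) .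
    by rewrite leqNgt valFp_lt.
  by rewrite coprime_sym -coprime_modr kl coprimen1.
have [u hu] := Qn_aut_exists ck.
have uz : u (zeta l) = zeta l.
  rewrite hu; last by rewrite mulnC exprM zetaXn ?prime_gt0 // expr1n.
  by rewrite -(expr_mod _ (zetaXn (prime_gt0 prl))) kl expr1.
have uw : u (zeta p) = zeta p ^+ k.
  by rewrite hu // exprM wXp expr1n.
have := congr1 u Dsum; rewrite rmorph0 rmorph_sum /= => e; rewrite -[RHS]e.
apply: eq_bigr => i _; rewrite rmorphM Dfix // EM; congr (_ * _).
rewrite /E rmorphXn uw -[RHS]exprM.
by rewrite -(expr_mod _ wXp) -kp modnMml expr_mod ?wXp.
Qed.

Lemma indep (D : 'F_p -> algC) :
  (forall u : {rmorphism algC -> algC}, u (zeta l) = zeta l -> forall i, u (D i) = D i) ->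
  \sum_i D i * E i = 0 -> forall j, D j = D 0.
Proof.
move=> Dfix Dsum.
have step := @aut_step D Dfix Dsum.
suff h : forall j, p%:R * D j = \sum_i D i.
  move=> j; apply: (mulfI (_ : p%:R != 0 :> algC)); first by rewrite pnatr_eq0 -lt0n prime_gt0.
  by rewrite !h.
move=> j.
pose X := \sum_(m : 'F_p) E (m * - j) * \sum_i D i * E (m * i).
have X1 : X = \sum_i D i.
  rewrite /X (bigD1 0) //= [X in _ + X]big1 ?addr0; last first.
    by move=> m m0; rewrite step // mulr0.
  by rewrite mul0r E0 mul1r; apply: eq_bigr => i _; rewrite mul0r E0 mulr1.
have X2 : X = p%:R * D j.
  rewrite /X.
  under eq_bigr do rewrite mulr_sumr.
  rewrite exchange_big /=.
  have inner : forall i, \sum_(m : 'F_p) E (m * - j) * (D i * E (m * i))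
      = D i * (if i - j == 0 then p%:R else 0).
    move=> i; rewrite -E_sumM mulr_sumr; apply: eq_bigr => m _.
    by rewrite mulrDr ED mulrCA; congr (_ * _); exact: mulrC.
  under eq_bigr do rewrite inner subr_eq0.
  rewrite (bigD1 j) //= eqxx [X in _ + X]big1 ?addr0; first exact: mulrC.
  by move=> i /negbTE ->; rewrite mulr0.
by rewrite -X2 X1.
Qed.
End Char.

Definition Cf (p l : nat) (g : 'F_p -> 'Z_l) (a i : 'F_p) : algC :=
  \sum_(s | is_sq s && (a * s == i)) zeta l ^+ val (g s).
Arguments Cf {p l}.

Lemma theta_dec p l (alpha : 'F_p -> 'Z_l) a k :
  theta alpha a k = \sum_i Cf (fun s => k * alpha s) a i * E p i.
Proof.
rewrite /theta (partition_big (fun s => a * s) xpredT) //.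
apply: eq_bigr => i _; rewrite /Cf mulr_suml; apply: eq_bigr => s /andP[_ /eqP <-].
by rewrite mulrC.
Qed.

Lemma Cf_unit p l (g : 'F_p -> 'Z_l) a i : a != 0 ->
  Cf g a i = if is_sq (a^-1 * i) then zeta l ^+ val (g (a^-1 * i)) else 0.
Proof.
move=> a0; rewrite /Cf (eq_bigl (fun s => (s == a^-1 * i) && is_sq s)); last first.
  move=> s; rewrite andbC; congr (_ && _).
  by apply/idP/idP => [/eqP <-|/eqP ->]; rewrite ?mulKf ?mulVKf.
case: ifP => h.
  rewrite (eq_bigl (pred1 (a^-1 * i))) ?big_pred1_eq //.
  by move=> s /=; case: eqP => // ->; rewrite h.
by rewrite big_pred0 // => s; case: eqP => // ->; rewrite h.
Qed.

Lemma Cf_zero p l (g : 'F_p -> 'Z_l) i : i != 0 -> Cf g 0 i = 0.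
Proof.
by move=> i0; rewrite /Cf big_pred0 // => s; rewrite mul0r eq_sym (negbTE i0) andbF.
Qed.

Lemma Cf_fix p l (g : 'F_p -> 'Z_l) a i (u : {rmorphism algC -> algC}) :
  u (zeta l) = zeta l -> u (Cf g a i) = Cf g a i.
Proof.
by move=> uz; rewrite /Cf rmorph_sum; apply: eq_bigr => s _; rewrite rmorphXn uz.
Qed.

Lemma zetaX_neq0 l n : prime l -> zeta l ^+ n != 0.
Proof.
move=> pl; rewrite expf_neq0 //; apply/eqP => z0.
by have := zetaXn (prime_gt0 pl); rewrite z0 expr0n gtn_eqF ?prime_gt0 // => /eqP; rewrite eq_sym oner_eq0.
Qed.

Lemma zetaX_inj l (x y : 'Z_l) : prime l -> zeta l ^+ val x = zeta l ^+ val y -> x = y.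
Proof.
move=> pl /eqP; rewrite (eq_prim_root_expr (@zeta_prim l pl)) => /eqP.
have l1 := prime_gt1 pl.
have lt : forall z : 'Z_l, (val z < l)%N.
  by case=> /= z; rewrite (Zp_cast l1).
by rewrite !modn_small // => e; apply: val_inj.
Qed.

Lemma sq0 p : @is_sq p 0 = false.
Proof. by rewrite /is_sq eqxx. Qed.

Lemma sq1 p : prime p -> @is_sq p 1.
Proof.
move=> pp; rewrite /is_sq oner_eq0 /=; apply/existsP; exists 1; by rewrite expr1n.
Qed.

Lemma nonsq p : prime p -> (2 < p)%N -> exists j : 'F_p, (j != 0) && ~~ is_sq j.
Proof.
move=> pp p2; apply/existsP; apply: contraT => /existsPn H.
have all_sq : forall j : 'F_p, exists y : 'F_p, y ^+ 2 == j.
  move=> j; case: (eqVneq j 0) => [->|j0]; first by exists 0; rewrite expr0n.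
  by have := H j; rewrite j0 negbK => /andP[_ /existsP].
pose g j := xchoose (all_sq j).
have fg : cancel g (fun y => y ^+ 2) by move=> j; apply/eqP; exact: (xchooseP (all_sq j)).
have [h gh hg] := injF_bij (can_inj fg).
have e : g (h 1) = g (h (-1)).
  congr g; rewrite -[h 1]fg -[h (-1)]fg.
  by rewrite !hg sqrrN.
rewrite !hg in e.
have : (1 + 1 : 'F_p) == 0 by rewrite addr_eq0 -e.
by rewrite -val_eqE valFpD // valFp1 // modn_small.
Qed.

Theorem theorem1p1 (p l : nat) (alpha beta : 'F_p -> 'Z_l) :
  prime p -> (p %% 4 = 1)%N -> prime l -> l != p ->
  voltage alpha -> voltage beta ->
  perm_eq (spectrum alpha) (spectrum beta) ->
  (exists n : 'Z_l, n \is a GRing.unit /\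
     exists f : 'F_p * 'Z_l -> 'F_p * 'Z_l,
       cover_iso alpha (scale_voltage n beta) f) /\
  (exists g : 'F_p * 'Z_l -> 'F_p * 'Z_l,
       graph_iso (cover_adj alpha) (cover_adj beta) g).
Proof.
move=> pp p4 pl lp va vb hperm.
have p2 : (2 < p)%N.
  have := prime_gt1 pp; rewrite leq_eqVlt => /orP[/eqP p2|//].
  by rewrite -p2 in p4.
have [[a k] ha] : exists x : 'F_p * 'Z_l, theta alpha 1 1 = theta beta x.1 x.2.
  have : theta alpha 1 1 \in spectrum beta.
    rewrite -(perm_mem hperm); apply/mapP; exists (1, 1) => //.
    by rewrite mem_enum.
  by case/mapP => x _ e; exists x.
rewrite /= in ha.
pose D i := Cf (fun s => 1 * alpha s) 1 i - Cf (fun s => k * beta s) a i.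
have hD : forall j, D j = D 0.
  apply: (@indep p pp l pl lp).
    by move=> u uz i; rewrite /D rmorphB !Cf_fix.
  rewrite /D; under eq_bigr do rewrite mulrBl.
  by rewrite sumrB -(theta_dec _ _ alpha 1 1) -(theta_dec _ _ beta a k) ha subrr.
have CA : forall i, Cf (fun s => 1 * alpha s) 1 i = if is_sq i then zeta l ^+ val (alpha i) else 0.
  move=> i; rewrite Cf_unit ?oner_eq0 // invr1 mul1r.
  by case: ifP => // _; congr (_ ^+ _); congr val; exact: mul1r.
case: (eqVneq a 0) => [a0|a0].
  exfalso; subst a.
  have [j /andP[j0 nj]] := @nonsq p pp p2.
  have e1 : D 1 = zeta l ^+ val (alpha 1).
    by rewrite /D CA sq1 // Cf_zero ?oner_eq0 // subr0.
  have ej : D j = 0 by rewrite /D CA (negbTE nj) Cf_zero // subr0.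
  by move: (@zetaX_neq0 l (val (alpha 1)) pl); rewrite -e1 hD -(hD j) ej eqxx.
have D0 : D 0 = 0 by rewrite /D CA sq0 Cf_unit // mulr0 sq0 subrr.
have key : forall i, is_sq i = is_sq (a^-1 * i) /\ (is_sq i -> alpha i = k * beta (a^-1 * i)).
  move=> i; have := hD i; rewrite D0 /D CA Cf_unit // => /eqP; rewrite subr_eq0 => /eqP.
  case: (is_sq i); case: (is_sq (a^-1 * i)) => // e.
  - by split => // _; apply: (@zetaX_inj l _ _ pl).
  - by move: (@zetaX_neq0 l (val (alpha i)) pl); rewrite e eqxx.
  - by move: (@zetaX_neq0 l (val (k * beta (a^-1 * i))) pl); rewrite e eqxx.
have k0 : k != 0.
  case: va => [[s [ss as0]] _]; apply: contraNneq as0 => k0.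
  by have [_ ->] := key s; rewrite // k0 mul0r.
have ku : k \is a GRing.unit.
  have l1 := prime_gt1 pl.
  rewrite -[k]natr_Zp unitZpE // prime_coprime // gtnNdvd //.
    by rewrite lt0n; apply: contra k0 => /eqP h; apply/eqP; exact: val_inj.
  by case: (k) => /= z; rewrite (Zp_cast l1).
split.
  exists k; split => //; exists (fun x => (a^-1 * x.1, x.2)); split.
    split.
      exists (fun x => (a * x.1, x.2)) => [[x i]|[x i]] /=.
        by rewrite mulVKf.
      by rewrite mulKf.
    move=> [x i] [y j]; rewrite /cover_adj /scale_voltage /= -mulrBr.
    have [h1 h2] := key (y - x); rewrite -h1.
    by case E1 : (is_sq (y - x)) => //=; rewrite h2.
  by [].
exists (fun x => (a^-1 * x.1, k^-1 * x.2)); split.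
  exists (fun x => (a * x.1, k * x.2)) => [[x i]|[x i]] /=.
    by rewrite mulVKf // mulVKr.
  by rewrite mulKf // mulKr.
move=> [x i] [y j]; rewrite /cover_adj /= -!mulrBr.
have [h1 h2] := key (y - x); rewrite -h1.
case E1 : (is_sq (y - x)) => //=; rewrite h2 //.
by apply/eqP/eqP => [->|<-]; rewrite ?mulKr ?mulVKr.
Qed.
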